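(* Let $A=(\Sigma, Q, Q_0, \delta, F)$ be an $n$-state NFA that remembers the last symbol. For each symbol $a \in \Sigma$, let $Q_a=\bigcup_{q\in Q}\delta(q,a) \subseteq Q$ be the set of states reachable by a transition by $a$, and let $n_1 = \max_{a \in \Sigma} |Q_a|$. Then there exists a DFA with at most $\max(2^{\frac{n}{2}+1}, 2^{n_1+1})$ states that recognizes $L(A)$.
   Context: An NFA is a quintuple $(\Sigma,Q,Q_0,\delta,F)$ with finite alphabet $\Sigma$, finite state set $Q$, set of initial states $Q_0\subseteq Q$, transition function $\delta\colon Q\times\Sigma\to 2^Q$ and accepting states $F\subseteq Q$; $L(A)$ is the set of strings having an accepting computation. A DFA is an NFA with one initial state and exactly one transition from each state by each symbol. An NFA remembers the last symbol if its state set is a disjoint union of subsets $P_a$ ($a\in\Sigma$) with $\delta(q,a)\subseteq P_a$ for all $q\in Q$, $a\in\Sigma$. *)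

(* Defs.v *)
From mathcomp Require Import all_boot.
Set Implicit Arguments. Unset Strict Implicit. Unset Printing Implicit Defensive.

Record nfa (Sigma Q : finType) := NFA {
  nfa_init  : {set Q};
  nfa_delta : Q -> Sigma -> {set Q};
  nfa_final : {set Q} }.

Fixpoint nfa_run (Sigma Q : finType) (A : nfa Sigma Q) (p : Q)
    (w : seq Sigma) (qs : seq Q) : bool :=
  match w, qs with
  | [::], [::] => true
  | a :: w', q :: qs' => (q \in nfa_delta A p a) && nfa_run A q w' qs'
  | _, _ => false
  end.

Definition nfa_accepts (Sigma Q : finType) (A : nfa Sigma Q) (w : seq Sigma) : Prop :=
  exists q0, exists qs, [/\ q0 \in nfa_init A, nfa_run A q0 w qs &
                           last q0 qs \in nfa_final A].

Definition remembers_last_symbol (Sigma Q : finType) (A : nfa Sigma Q) : Prop :=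
  exists P : Sigma -> {set Q},
    [/\ (forall a b, a != b -> [disjoint P a & P b]),
        \bigcup_(a : Sigma) P a = [set: Q] &
        forall q a, nfa_delta A q a \subset P a].

Definition reach_by (Sigma Q : finType) (A : nfa Sigma Q) (a : Sigma) : {set Q} :=
  \bigcup_(q : Q) nfa_delta A q a.

Record dfa (Sigma : finType) (m : nat) := DFA {
  dfa_start : 'I_m;
  dfa_step  : 'I_m -> Sigma -> 'I_m;
  dfa_final : {set 'I_m} }.

Definition dfa_accepts (Sigma : finType) (m : nat) (D : dfa Sigma m) (w : seq Sigma) : Prop :=
  foldl (dfa_step D) (dfa_start D) w \in dfa_final D.

(* Main.v *)
Require Import Defs.
From mathcomp Require Import all_boot.
From mathcomp Require Import zify.


Lemma chord k c : k <= c -> c * (2^k - 1) <= k * (2^c - 1).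
Proof.
elim: c => [|c IH]; first by rewrite leqn0 => /eqP->.
rewrite leq_eqVlt => /orP[/eqP->|]; first by rewrite mulnC.
rewrite ltnS => kc; have := IH kc.
have XY : 2^k <= 2^c by rewrite leq_exp2l.
have Y1 : 1 <= 2^c by rewrite expn_gt0.
rewrite expnS.
case: k kc XY IH => [|k] kc XY IH; first by rewrite expn0 subnn muln0.
nia.
Qed.

Lemma arith n n1 S :
  (forall c, n1 <= c -> c * S <= n * (2^c - 1)) -> (n1 = 0 -> S = 0) ->
  (S + 2) ^ 2 <= 2 ^ (n + 2) \/ S + 2 <= 2 ^ n1.+1.
Proof.
move=> Hc H0.
case: (leqP n (2 * n1)) => hn.
  right; case: n1 Hc H0 hn => [|n1] Hc H0 hn; first by rewrite H0.
  have := Hc n1.+1 (leqnn _).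
  have X1 : 1 <= 2^n1.+1 by rewrite expn_gt0.
  move=> h; have h2 : n1.+1 * S <= n1.+1 * (2 * (2^n1.+1 - 1)).
    apply: (leq_trans h); rewrite mulnA [n1.+1 * 2]mulnC leq_mul2r; lia.
  rewrite leq_pmul2l // in h2; rewrite (expnS 2 n1.+1); lia.
left.
set c := n./2.
have hn2 : n = c.*2 + odd n by rewrite addnC odd_double_half.
have n1c : n1 <= c by lia.
have X1 : 1 <= 2^c by rewrite expn_gt0.
have E : 2 ^ (n + 2) = 2^c * 2^c * 4 * 2 ^ odd n.
  by rewrite {1}hn2 -addnn !expnD; lia.
rewrite E.
case: c hn2 n1c X1 E => [|c] hn2 n1c X1 E.
  rewrite H0; last by lia. rewrite expn0; case: (odd n) => /=; lia.
have h := Hc c.+1 n1c.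
case: (odd n) hn2 E => hn2 E; rewrite hn2 in h.
-
  rewrite expn1.
  case: c X1 E h n1c hn2 => [|[|c]] X1 E h n1c hn2.
  + rewrite -mulnn; rewrite !expnS !expn0 in h *.
    have hs : S + 2 <= 5 by lia.
    have := leq_mul hs hs; lia.
  + rewrite -mulnn; rewrite !expnS !expn0 in h *.
    have hs : S + 2 <= 9 by lia.
    have := leq_mul hs hs; lia.
  + move: X1 h; set X := 2 ^ c.+3 => X1 h; clearbody X.
    have h3 : 3 * (S - 2 * (X - 1)) <= X - 1.
      apply: leq_trans (_ : c.+3 * (S - 2 * (X - 1)) <= X - 1).
        by rewrite leq_mul2r; apply/orP; right.
      lia.
    have h4 : 3 * (S + 2) <= 7 * X by lia.
    have h5 : (3 * (S + 2)) ^ 2 <= (7 * X) ^ 2 by rewrite leq_exp2r.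
    rewrite !expnMn in h5. have : 3 ^ 2 * (S + 2) ^ 2 <= 3 ^ 2 * (X * X * 4 * 2).
      apply: leq_trans h5 _. rewrite !expnS !expn0 !muln1; nia.
    by rewrite leq_pmul2l.
- rewrite expn0 muln1.
  move: X1 h; set X := 2 ^ c.+1 => X1 h.
  have h2 : c.+1 * S <= c.+1 * (2 * (X - 1)) by lia.
  rewrite leq_pmul2l // in h2.
  have : S + 2 <= 2 * X by lia.
  move=> h3; have := leq_mul h3 h3; rewrite -mulnn; lia.
Qed.

Section Aut.
Variables (Sigma Q : finType) (A : nfa Sigma Q).

Definition sstep (X : {set Q}) (a : Sigma) : {set Q} :=
  \bigcup_(q in X) nfa_delta A q a.

Lemma sstep_reach X a : sstep X a \subset reach_by A a.
Proof.
apply/subsetP => q /bigcupP [p _ hq]; apply/bigcupP; by exists p.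
Qed.

Lemma foldl_sstep w X q :
  q \in foldl sstep X w <->
  exists p, exists qs, [/\ p \in X, nfa_run A p w qs & last p qs = q].
Proof.
elim: w X => [|a w IH] X /=.
  split; first by move=> h; exists q, [::].
  by move=> [p [[|x qs] [pX hr hl]]] //=; rewrite -hl.
rewrite IH; split.
  move=> [p' [qs [/bigcupP [p pX hp'] hr hl]]].
  by exists p, (p' :: qs); split => //=; rewrite hp' hr.
move=> [p [[|p' qs] [pX hr hl]]] //=.
move: hr => /= /andP [hp' hr].
exists p', qs; split => //; apply/bigcupP; by exists p.
Qed.

Lemma card_bigcup_le (I : finType) (T : finType) (F : I -> {set T}) :
  #|\bigcup_i F i| <= \sum_i #|F i|.
Proof.
apply: (big_ind2 (fun (X : {set T}) n => #|X| <= n)).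
- by rewrite cards0.
- move=> X1 n1 X2 n2 h1 h2; apply: leq_trans (leq_card_setU X1 X2).1 _.
  exact: leq_add.
- by [].
Qed.

End Aut.
Arguments sstep {Sigma Q} A X a.
Arguments sstep_reach {Sigma Q} A X a.
Arguments foldl_sstep {Sigma Q} A w X q.
Arguments card_bigcup_le {I T} F.

Theorem lemma2 (Sigma Q : finType) (A : nfa Sigma Q) :
  remembers_last_symbol A ->
  let n := #|Q| in
  let n1 := \max_(a : Sigma) #|reach_by A a| in
  exists m : nat, exists D : dfa Sigma m,
    ((m ^ 2 <= 2 ^ (n + 2)) \/ (m <= 2 ^ n1.+1)) /\
    (forall w : seq Sigma, dfa_accepts D w <-> nfa_accepts A w).
Proof.
move=> [P [disjP coverP subP]] n n1.
pose R : {set {set Q}} :=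
  nfa_init A |: \bigcup_a powerset (reach_by A a).
have h0 : nfa_init A \in R by rewrite setU11.
have inR : forall X a, sstep A X a \in R.
  move=> X a; apply/setU1P; right; apply/bigcupP; exists a => //.
  by rewrite powersetE sstep_reach.
pose D := DFA (enum_rank_in h0 (nfa_init A))
  (fun i a => enum_rank_in h0 (sstep A (enum_val i) a))
  [set i | enum_val i :&: nfa_final A != set0].
have key : forall w i, enum_val (foldl (dfa_step D) i w) =
                       foldl (sstep A) (enum_val i) w.
  elim=> [|a w IH] i //=.
  by rewrite IH /= enum_rankK_in.
exists #|R|, D; split; last first.
  move=> w; rewrite /dfa_accepts inE key /= enum_rankK_in //.
  split.
    move=> /set0Pn [q /setIP [hq hF]].
    move/foldl_sstep: hq => [p [qs [pX hr hl]]].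
    by exists p, qs; split => //; rewrite hl.
  move=> [p [qs [pX hr hF]]]; apply/set0Pn; exists (last p qs).
  rewrite inE hF andbT; apply/foldl_sstep; by exists p, qs.
pose k a := #|reach_by A a|.
pose S := \sum_a (2 ^ k a - 1).
have cardR : #|R| <= S + 2.
  rewrite cardsU1.
  have : #|\bigcup_a powerset (reach_by A a)| <= S + 1.
    apply: (@leq_trans #|set0 |: \bigcup_a (powerset (reach_by A a) :\ set0)|).
      apply: subset_leq_card; apply/subsetP => X /bigcupP [a _ hX].
      case: (eqVneq X set0) => [->|ne]; first by rewrite setU11.
      apply/setU1P; right; apply/bigcupP; exists a => //.
      by rewrite in_setD1 ne hX.
    rewrite cardsU1 addnC; apply: leq_add; last by case: (_ \notin _).
    apply: leq_trans (card_bigcup_le _) _.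
    apply: leq_sum => a _.
    have := cardsD1 set0 (powerset (reach_by A a)).
    by rewrite card_powerset powersetE sub0set /k => ->; rewrite add1n subSS subn0.
  move=> h; apply: leq_trans (leq_add (leq_b1 _) h) _; lia.
have kn1 : forall a, k a <= n1 by move=> a; exact: leq_bigmax.
have sumk : \sum_a k a <= n.
  apply: (@leq_trans (\sum_a #|P a|)).
    apply: leq_sum => a _; apply: subset_leq_card.
    by apply/bigcupsP => q _; exact: subP.
  have := @partition_disjoint_bigcup Q Sigma nat 0 addn P (fun _ => 1) disjP.
  rewrite coverP sum1_card => e; rewrite /n -cardsT e.
  by apply: eq_leq; apply: eq_bigr => a _; rewrite sum1_card.
have Hc : forall c, n1 <= c -> c * S <= n * (2 ^ c - 1).
  move=> c hc; rewrite /S big_distrr /=.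
  apply: (@leq_trans (\sum_a k a * (2 ^ c - 1))).
    apply: leq_sum => a _; apply: chord; exact: leq_trans (kn1 a) hc.
  by rewrite -big_distrl leq_mul2r sumk orbT.
have H0 : n1 = 0 -> S = 0.
  move=> e; apply: big1 => a _; have := kn1 a; rewrite e leqn0 => /eqP ->.
  by rewrite expn0.
have := @arith n n1 S Hc H0.
move=> [h|h]; [left|right]; apply: leq_trans h.
  by rewrite leq_exp2r.
exact: cardR.
Qed.
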